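(* The direct product $\mathbb{N}\times\mathbb{N}$ contains uncountably many pairwise non-isomorphic subsemigroups.
   Context: $\mathbb{N}=\{1,2,3,\dots\}$ denotes the free monogenic semigroup, i.e. the positive integers under addition; $\mathbb{N}\times\mathbb{N}$ is the direct product with componentwise addition. *)

(* Defs.v *)
(* N = {1,2,3,...} under addition; N x N with componentwise addition.
   Elements of N x N are represented as pairs of Rocq naturals with both
   components >= 1; subsets are predicates on nat * nat. *)
From Stdlib Require Import Arith.

Definition inNN (p : nat * nat) : Prop := 1 <= fst p /\ 1 <= snd p.

Definition addp (p q : nat * nat) : nat * nat := (fst p + fst q, snd p + snd q).

Definition subsemigroup (S : nat * nat -> Prop) : Prop :=
  (exists p, S p) /\
  (forall p, S p -> inNN p) /\
  (forall p q, S p -> S q -> S (addp p q)).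

Definition isomorphic (S T : nat * nat -> Prop) : Prop :=
  exists f g : nat * nat -> nat * nat,
    (forall p, S p -> T (f p)) /\
    (forall q, T q -> S (g q)) /\
    (forall p, S p -> g (f p) = p) /\
    (forall q, T q -> f (g q) = q) /\
    (forall p q, S p -> S q -> f (addp p q) = addp (f p) (f q)).

Definition same_set (S T : nat * nat -> Prop) : Prop := forall p, S p <-> T p.

Definition countable_family (F : (nat * nat -> Prop) -> Prop) : Prop :=
  exists e : nat -> (nat * nat -> Prop), forall S, F S -> exists n, same_set (e n) S.

(* Main.v *)
Require Import Defs.
From Stdlib Require Import Arith ZArith Lia.

Definition Ss (s : nat -> Prop) (p : nat * nat) : Prop :=
  (1 <= fst p)%nat /\ ((2 <= snd p)%nat \/ (snd p = 1%nat /\ (3 <= fst p)%nat /\ s (fst p - 3)%nat)).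

Lemma Ss_sub s : subsemigroup (Ss s).
Proof.
  split; [exists (1,2)%nat; unfold Ss; simpl; lia|].
  split.
  - intros [a b] [h1 h2]; unfold inNN; simpl in *; lia.
  - intros [a b] [c d] [h1 h2] [h3 h4]; unfold Ss, addp in *; simpl in *; lia.
Qed.

Lemma lin (Sg : nat*nat -> Prop) (phi : nat*nat -> Z)
  (hS : forall a b, (1<=a)%nat -> (2<=b)%nat -> Sg (a,b))
  (hS1 : forall p, Sg p -> (1 <= fst p)%nat /\ (1 <= snd p)%nat)
  (add : forall p q, Sg p -> Sg q -> phi (addp p q) = (phi p + phi q)%Z) :
  forall p, Sg p -> phi p = (Z.of_nat (fst p) * (phi (2%nat,2%nat) - phi (1%nat,2%nat))
                           + Z.of_nat (snd p) * (phi (1%nat,3%nat) - phi (1%nat,2%nat)))%Z.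
Proof.
  set (c := phi (1,2)). set (d := phi (2,2)). set (e := phi (1,3)).
  assert (H1: forall a b, (1<=a)%nat -> (2<=b)%nat -> phi (S a, b) = (phi (a,b) + d - c)%Z).
  { intros a b ha hb.
    pose proof (add (a,b) (2,2) (hS _ _ ha hb) (hS 2 2 ltac:(lia) ltac:(lia))) as E1.
    pose proof (add (S a,b) (1,2) (hS (S a) b ltac:(lia) hb) (hS 1 2 ltac:(lia) ltac:(lia))) as E2.
    assert (addp (S a, b) (1,2) = addp (a,b) (2,2)) as Heq by (unfold addp; simpl; f_equal; lia).
    rewrite Heq in E2. fold c d in E1, E2. lia. }
  assert (H2: forall a b, (1<=a)%nat -> (2<=b)%nat -> phi (a, S b) = (phi (a,b) + e - c)%Z).
  { intros a b ha hb.
    pose proof (add (a,b) (1,3) (hS _ _ ha hb) (hS 1 3 ltac:(lia) ltac:(lia))) as E1.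
    pose proof (add (a,S b) (1,2) (hS a (S b) ha ltac:(lia)) (hS 1 2 ltac:(lia) ltac:(lia))) as E2.
    assert (addp (a, S b) (1,2) = addp (a,b) (1,3)) as Heq by (unfold addp; simpl; f_equal; lia).
    rewrite Heq in E2. fold c e in E1, E2. lia. }
  assert (H4: forall k j, phi (1 + k, 2 + j)%nat = (c + Z.of_nat k * (d - c) + Z.of_nat j * (e - c))%Z).
  { intros k j. induction k.
    - induction j.
      + simpl. fold c. lia.
      + replace (2 + S j)%nat with (S (2 + j)) by lia.
        rewrite H2 by lia. rewrite IHj. rewrite Nat2Z.inj_succ. nia.
    - replace (1 + S k)%nat with (S (1 + k)) by lia.
      rewrite H1 by lia. rewrite IHk. rewrite Nat2Z.inj_succ. nia. }
  assert (H3: c = ((d - c) + 2 * (e - c))%Z).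
  { pose proof (add (1,2) (1,2) (hS 1 2 ltac:(lia) ltac:(lia)) (hS 1 2 ltac:(lia) ltac:(lia))) as E.
    unfold addp in E; simpl in E. pose proof (H4 1%nat 2%nat) as E'. change (phi (1+1,2+2)%nat) with (phi (2,4)) in E'. replace (Z.of_nat 1) with 1%Z in E' by reflexivity. replace (Z.of_nat 2) with 2%Z in E' by reflexivity.
    fold c in E. lia. }
  assert (H5: forall a b, (1<=a)%nat -> (2<=b)%nat ->
            phi (a,b) = (Z.of_nat a * (d - c) + Z.of_nat b * (e - c))%Z).
  { intros a b ha hb. replace a with (1 + (a-1))%nat by lia. replace b with (2 + (b-2))%nat by lia.
    rewrite H4. rewrite !Nat2Z.inj_add. nia. }
  intros [a b] hp. simpl. destruct (hS1 _ hp) as [ha hb]; simpl in ha, hb.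
  destruct (Nat.eq_dec b 1) as [->|hb2]; [|apply H5; lia].
  pose proof (add (a,1%nat) (1,2) hp (hS 1 2 ltac:(lia) ltac:(lia))) as E.
  unfold addp in E; simpl in E. rewrite H5 in E by lia. fold c in E.
  rewrite Nat2Z.inj_add in E. change (Z.of_nat 1) with 1%Z in *. change (Z.of_nat 3) with 3%Z in E. nia.
Qed.

Lemma Ss_lin s (h : nat*nat -> nat*nat)
  (hadd : forall p q, Ss s p -> Ss s q -> h (addp p q) = addp (h p) (h q)) :
  exists D1 E1 D2 E2 : Z, forall p, Ss s p ->
    Z.of_nat (fst (h p)) = (Z.of_nat (fst p) * D1 + Z.of_nat (snd p) * E1)%Z /\
    Z.of_nat (snd (h p)) = (Z.of_nat (fst p) * D2 + Z.of_nat (snd p) * E2)%Z.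
Proof.
  assert (hS : forall a b, (1<=a)%nat -> (2<=b)%nat -> Ss s (a,b)) by (intros; unfold Ss; simpl; lia).
  assert (hS1 : forall p, Ss s p -> (1 <= fst p)%nat /\ (1 <= snd p)%nat) by (intros p [h1 h2]; lia).
  eexists _, _, _, _. intros p hp. split.
  - apply (lin (Ss s) (fun p => Z.of_nat (fst (h p))) hS hS1); auto.
    intros p0 q hp0 hq. rewrite hadd by auto. unfold addp; simpl. lia.
  - apply (lin (Ss s) (fun p => Z.of_nat (snd (h p))) hS hS1); auto.
    intros p0 q hp0 hq. rewrite hadd by auto. unfold addp; simpl. lia.
Qed.

Lemma posl (x y : Z) : (forall n : nat, (2 <= n)%nat -> (1 <= x + Z.of_nat n * y)%Z) -> (0 <= y)%Z.
Proof.
  intros H. destruct (Z_lt_le_dec y 0) as [hy|hy]; auto.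
  specialize (H (Z.to_nat (Z.abs x) + 2)%nat ltac:(lia)).
  rewrite Nat2Z.inj_add, Z2Nat.id in H by lia. nia.
Qed.

Lemma iso_sym S T : subsemigroup S -> isomorphic S T -> isomorphic T S.
Proof.
  intros (_ & _ & hcl) (f & g & hf & hg & hgf & hfg & hadd).
  exists g, f. repeat split; auto.
  intros p q hp hq.
  assert (S (addp (g p) (g q))) as HS by auto.
  assert (f (addp (g p) (g q)) = addp p q) as E by (rewrite hadd, !hfg; auto).
  rewrite <- E, hgf; auto.
Qed.

Lemma iso_incl s t : isomorphic (Ss s) (Ss t) -> forall n, s n -> t n.
Proof.
  intros Hiso.
  destruct Hiso as (f & g & hf & hg & hgf & hfg & hadd).
  assert (hadd' : forall p q, Ss t p -> Ss t q -> g (addp p q) = addp (g p) (g q)).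
  { destruct (Ss_sub s) as (_ & _ & hcl). intros p q hp hq.
    assert (Ss s (addp (g p) (g q))) as HS by auto.
    assert (f (addp (g p) (g q)) = addp p q) as E by (rewrite hadd, !hfg; auto).
    rewrite <- E, hgf; auto. }
  destruct (Ss_lin s f hadd) as (D1 & E1 & D2 & E2 & hl).
  destruct (Ss_lin t g hadd') as (D1' & E1' & D2' & E2' & hl').
  assert (hS : forall a b, (1<=a)%nat -> (2<=b)%nat -> Ss s (a,b)) by (intros; unfold Ss; simpl; lia).
  assert (hT : forall a b, (1<=a)%nat -> (2<=b)%nat -> Ss t (a,b)) by (intros; unfold Ss; simpl; lia).
  assert (pos : forall a b, (1<=a)%nat -> (2<=b)%nat ->
     (1 <= Z.of_nat a * D1 + Z.of_nat b * E1)%Z /\ (1 <= Z.of_nat a * D2 + Z.of_nat b * E2)%Z).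
  { intros a b ha hb. destruct (hl (a,b) (hS a b ha hb)) as [e1 e2]. simpl in e1, e2.
    destruct (hf (a,b) (hS a b ha hb)) as [h1 h2]. split; [lia|]. lia. }
  assert (pos' : forall a b, (1<=a)%nat -> (2<=b)%nat ->
     (1 <= Z.of_nat a * D1' + Z.of_nat b * E1')%Z /\ (1 <= Z.of_nat a * D2' + Z.of_nat b * E2')%Z).
  { intros a b ha hb. destruct (hl' (a,b) (hT a b ha hb)) as [e1 e2]. simpl in e1, e2.
    destruct (hg (a,b) (hT a b ha hb)) as [h1 h2]. split; [lia|]. lia. }
  assert (0 <= D1)%Z. { apply (posl (2*E1)). intros n hn. pose proof (pos n 2%nat ltac:(lia) ltac:(lia)). lia. }
  assert (0 <= D2)%Z. { apply (posl (2*E2)). intros n hn. pose proof (pos n 2%nat ltac:(lia) ltac:(lia)). lia. }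
  assert (0 <= E1)%Z. { apply (posl D1). intros n hn. pose proof (pos 1%nat n ltac:(lia) ltac:(lia)). lia. }
  assert (0 <= E2)%Z. { apply (posl D2). intros n hn. pose proof (pos 1%nat n ltac:(lia) ltac:(lia)). lia. }
  assert (0 <= D1')%Z. { apply (posl (2*E1')). intros n hn. pose proof (pos' n 2%nat ltac:(lia) ltac:(lia)). lia. }
  assert (0 <= D2')%Z. { apply (posl (2*E2')). intros n hn. pose proof (pos' n 2%nat ltac:(lia) ltac:(lia)). lia. }
  assert (0 <= E1')%Z. { apply (posl D1'). intros n hn. pose proof (pos' 1%nat n ltac:(lia) ltac:(lia)). lia. }
  assert (0 <= E2')%Z. { apply (posl D2'). intros n hn. pose proof (pos' 1%nat n ltac:(lia) ltac:(lia)). lia. }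
  assert (inv : forall a b, (1<=a)%nat -> (2<=b)%nat ->
     Z.of_nat a = ((Z.of_nat a * D1 + Z.of_nat b * E1) * D1' + (Z.of_nat a * D2 + Z.of_nat b * E2) * E1')%Z /\
     Z.of_nat b = ((Z.of_nat a * D1 + Z.of_nat b * E1) * D2' + (Z.of_nat a * D2 + Z.of_nat b * E2) * E2')%Z).
  { intros a b ha hb. pose proof (hS a b ha hb) as hp.
    destruct (hl _ hp) as [e1 e2]. destruct (hl' _ (hf _ hp)) as [e3 e4].
    rewrite hgf in e3, e4 by auto. simpl in e1, e2, e3, e4. rewrite <- e1, <- e2. auto. }
  destruct (inv 1%nat 2%nat ltac:(lia) ltac:(lia)) as [i1 i2].
  destruct (inv 2%nat 2%nat ltac:(lia) ltac:(lia)) as [i3 i4].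
  change (Z.of_nat 1) with 1%Z in *. change (Z.of_nat 2) with 2%Z in *.
  assert (X1 : (D1 * D1' + D2 * E1' = 1)%Z) by lia.
  assert (Y1 : (E1 * D1' + E2 * E1' = 0)%Z) by lia.
  assert (X2 : (D1 * D2' + D2 * E2' = 0)%Z) by lia.
  assert (Y2 : (E1 * D2' + E2 * E2' = 1)%Z) by lia.
  clear i1 i2 i3 i4 inv pos pos'.
  assert ((D1 = 1 /\ D2 = 0 /\ E1 = 0 /\ E2 = 1) \/ (D1 = 0 /\ D2 = 1 /\ E1 = 1 /\ E2 = 0))%Z as Hc.
  { assert (0 <= D1*D1')%Z by nia. assert (0 <= D2*E1')%Z by nia.
    assert (0 <= E1*D1')%Z by nia. assert (0 <= E2*E1')%Z by nia.
    assert (0 <= D1*D2')%Z by nia. assert (0 <= D2*E2')%Z by nia.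
    assert (0 <= E1*D2')%Z by nia. assert (0 <= E2*E2')%Z by nia.
    destruct (Z.eq_dec (D1*D1') 1) as [Ha|Ha].
    - left. destruct (Z.eq_mul_1_nonneg D1 D1' ltac:(lia) Ha) as [-> ->].
      assert (E1 = 0)%Z by lia. assert (D2' = 0)%Z by lia. subst.
      assert (E2 * E2' = 1)%Z as Hb by lia.
      destruct (Z.eq_mul_1_nonneg E2 E2' ltac:(lia) Hb) as [-> ->]. lia.
    - right. assert (D2 * E1' = 1)%Z as Hb by lia.
      destruct (Z.eq_mul_1_nonneg D2 E1' ltac:(lia) Hb) as [-> ->].
      assert (E2 = 0)%Z by lia. assert (E2' = 0)%Z by lia. subst.
      assert (E1 * D2' = 1)%Z as Hc by lia.
      destruct (Z.eq_mul_1_nonneg E1 D2' ltac:(lia) Hc) as [-> ->]. lia. }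
  destruct Hc as [(-> & -> & -> & ->) | (-> & -> & -> & ->)].
  - intros n hn.
    assert (Ss s (n+3, 1)%nat) as hp by (unfold Ss; simpl; replace (n+3-3)%nat with n by lia; split; [lia|right; split; [reflexivity|split; [lia|exact hn]]]).
    destruct (hl _ hp) as [e1 e2]. simpl in e1, e2.
    pose proof (hf _ hp) as hT'. destruct (f (n+3,1)%nat) as [x y]. simpl in e1, e2.
    assert (x = n+3)%nat by lia. assert (y = 1)%nat by lia. subst x y.
    destruct hT' as [_ [h|(_ & _ & h)]]; simpl in h; [lia|]. replace (n+3-3)%nat with n in h by lia. exact h.
  - exfalso. pose proof (hS 1%nat 2%nat ltac:(lia) ltac:(lia)) as hp.
    destruct (hl _ hp) as [e1 e2]. simpl in e1, e2.
    pose proof (hf _ hp) as hT'. destruct (f (1,2)%nat) as [x y]. simpl in e1, e2.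
    assert (x = 2)%nat by lia. assert (y = 1)%nat by lia. subst x y.
    destruct hT' as [_ [h|(_ & h & _)]]; simpl in h; lia.
Qed.

Lemma iso_ext S T S' T' : same_set S S' -> same_set T T' -> isomorphic S T -> isomorphic S' T'.
Proof.
  intros h1 h2 (f & g & hf & hg & hgf & hfg & hadd).
  exists f, g. repeat split; intros; try apply h2; try apply h1; auto;
    try (apply hf || apply hg || apply hgf || apply hfg || apply hadd); try apply h1; try apply h2; auto.
Qed.

Theorem theoremA :
  exists F : (nat * nat -> Prop) -> Prop,
    (forall S, F S -> subsemigroup S) /\
    (forall S T, F S -> F T -> ~ same_set S T -> ~ isomorphic S T) /\
    ~ countable_family F.
Proof.
  exists (fun S => exists s, same_set S (Ss s)). split; [|split].
  - intros S [s hs]. destruct (Ss_sub s) as (ne & nn & cl). split; [|split].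
    + destruct ne as [p hp]. exists p. apply hs, hp.
    + intros p hp. apply nn, hs, hp.
    + intros p q hp hq. apply hs, cl; apply hs; auto.
  - intros S T [s hs] [t ht] hne hiso.
    assert (h1 : isomorphic (Ss s) (Ss t)).
    { apply (iso_ext S T); [intro p; apply hs | intro p; apply ht | exact hiso]. }
    pose proof (iso_sym _ _ (Ss_sub s) h1) as h2.
    apply hne. intro p. rewrite (hs p), (ht p). unfold Ss.
    pose proof (iso_incl _ _ h1). pose proof (iso_incl _ _ h2). firstorder.
  - intros [e he].
    set (dg := fun n => ~ e n (n+3, 1)%nat).
    destruct (he (Ss dg)) as [n hn]; [exists dg; intro p; tauto|].
    specialize (hn (n+3, 1)%nat). unfold Ss in hn. simpl in hn.
    replace (n+3-3)%nat with n in hn by lia. unfold dg in hn.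
    assert (~ e n (n+3,1)%nat) as Hn by (intro H; pose proof H as H0; apply hn in H0 as [_ [H0|(_ & _ & H0)]]; [lia|exact (H0 H)]).
    apply Hn, hn. split; [lia|]. right. split; [auto|split; [lia|exact Hn]].
Qed.
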